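(* Fix integers $2\le a<b$ with $a\nmid b$, a positive integer $d$, and a positive integer $k$. Assume $f^{(b)}_{b+1},\dots,f^{(b)}_{b+a-1}$ satisfy condition (T) at $\tilde{\mathbf c}\in\mathbb C^{a-1}$. Fix $\mathbf c(-\infty)\in(\mathbb C[[t]])^{a-1}$ with $c_i(-\infty)\equiv t^{di}\tilde c_i\bmod t^{di+1}$, and series $o_{b+j}(\mathbf c)$ ($j=1,\dots,a-1$) of the type described in the context. Suppose the system $\bar f^{(b)}_{b+j}(\mathbf c)=t^{d(b+j)}f^{(b)}_{b+j}(\tilde{\mathbf c})+o_{b+j}(\mathbf c)\pmod{t^{d(b+j)+k}}$, $j=1,\dots,a-1$, has a solution $\mathbf c(k-1)\in(\mathbb C[[t]])^{a-1}$ with $c_i(k-1)\equiv t^{di}\tilde c_i\bmod t^{di+1}$. Then the same system with $k$ replaced by $k+1$ has a solution $\mathbf c(k)$ with $c_i(k)\equiv c_i(k-1)\bmod t^{di+k}$ for all $i$.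
   Context: Polynomials $f^{(b)}_i(\mathbf c)$, $\mathbf c=(c_2,\dots,c_a)$, are defined by $(1+\sum_{k=2}^ac_kx^k)^{b/a}=1+\sum_{i\ge1}f^{(b)}_i(\mathbf c)x^i$. Condition (T) at $\tilde{\mathbf c}$ (for $a>2$): the Jacobian determinant at $\tilde{\mathbf c}$ of $(\bar f^{(b)}_{b+1},\dots,\bar f^{(b)}_{b+a-1})$ with $\bar f$ formed using constants $\tilde{\mathbf c}$ (formula below with $c_k(-\infty)$ replaced by $\tilde c_k$) is nonzero; for $a=2$, (T) holds at any $\tilde c\ne0$. In the system, $\bar f^{(b)}_{b+j}(\mathbf c)=f^{(b)}_{b+j}(\mathbf c)+\sum_{k=2}^{j-1}\frac{(j-k)(c_k-c_k(-\infty))}{a}f^{(b)}_{b+j-k}(\mathbf c(-\infty))-\sum_{k=2}^{j-1}\frac{j-k}{a}\sum_{l=2}^{k-2}\frac{a-l}{a}(c_{k-l}-c_{k-l}(-\infty))c_l(-\infty)f^{(b)}_{b+j-k}(\mathbf c(-\infty))$. Each $o_{b+j}(\mathbf c)\in\mathbb C[c_2,\dots,c_a][[t]]$ is a fixed ($t$-adically convergent) sum of terms of the forms (1) $\alpha t^mc_2^{l_2}\cdots c_a^{l_a}$ with $m+d\sum_pp\,l_p\ge d(b+j)+1$, or (2) $\alpha t^mc_2^{l_2}\cdots c_a^{l_a}(c_k-c_k(-\infty))(c_{k'}-c_{k'}(-\infty))$ with $m+d\sum_pp\,l_p\ge d(b+j)-d(k+k')$, where $\alpha\in\mathbb C$ and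 $m,l_p\ge0$; the unknowns $\mathbf c$ are substituted into these series. *)

(* Defs.v *)
From HB Require Import structures.
From mathcomp Require Import all_boot all_order all_algebra.
From mathcomp Require Import mpoly.
From mathcomp Require Import complex.
Set Implicit Arguments. Unset Strict Implicit. Unset Printing Implicit Defensive.
Import Order.TTheory GRing.Theory Num.Theory.
Local Open Scope ring_scope.

Section Defs.
Variable C : fieldType.

Definition gbin (a b n : nat) : C :=
  (\prod_(j < n) ((b%:R / a%:R) - j%:R)) / (n`!)%:R.

(** f^{(b)}_i(c), evaluated at c = (c_2,...,c_a) in any C-algebra A (only the
    indices 2..a of c : nat -> A are used):  the coefficient of x^i in
    (1 + u)^{b/a} = \sum_n binom(b/a,n) u^n,   u = \sum_{k=2}^a c_k x^k.
    Since u has x-order >= 2, only n <= i contribute. *)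
Definition fb (A : lalgType C) (a b i : nat) (c : nat -> A) : A :=
  \sum_(n < i.+1)
     gbin a b n *: (((\sum_(2 <= k < a.+1) (c k)%:P * 'X^k) ^+ n)`_i).

(** \bar f^{(b)}_{b+j}(c), formed with the "constants" c0 (= c(-oo) or ~c). *)
Definition fbar (A : lalgType C) (a b j : nat) (c c0 : nat -> A) : A :=
  fb a b (b + j)%N c
  + \sum_(2 <= k < j) (((j - k)%N%:R / a%:R) *: ((c k - c0 k) * fb a b (b + j - k)%N c0))
  - \sum_(2 <= k < j) (((j - k)%N%:R / a%:R) *:
        \sum_(2 <= l < k.-1) (((a - l)%N%:R / a%:R) *:
            ((c (k - l)%N - c0 (k - l)%N) * c0 l * fb a b (b + j - k)%N c0))).

Definition fbC (a b i : nat) (ct : nat -> C) : C := @fb C^o a b i ct.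

(** The polynomials are
    multivariate polynomials in variables 'X_0..'X_a, 'X_k standing for c_k. *)
Definition mvar (a : nat) : nat -> {mpoly C[a.+1]} := fun k => 'X_(inord k).

Definition condT (a b : nat) (ct : nat -> C) : Prop :=
  if a == 2%N then ct 2%N != 0 else
  \det (\matrix_(r < a.-1, s < a.-1)
          (mderiv (inord (s + 2)%N) (fbar a b r.+1 (mvar a) (fun k => (ct k)%:MP))).@[
             fun v : 'I_a.+1 => ct v]) != 0.

(** Formal power series in t over C: coefficient sequences. *)
Definition ps := nat -> C.

Definition ps_trunc (N : nat) (s : ps) : {poly C} := \poly_(i < N) s i.

Definition eqmodt (N : nat) (s s' : ps) : Prop := forall n, (n < N)%N -> s n = s' n.

Definition t_mono (m : nat) (x : C) : ps := fun n => if n == m then x else 0.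

(** Power series obtained by evaluating a polynomial expression E in c and
    c(-oo): its n-th coefficient is computed from the truncations mod t^{n+1}
    (C[[t]] -> C[t]/(t^{n+1}) is a ring morphism). *)
Definition ps_eval (E : (nat -> {poly C}) -> (nat -> {poly C}) -> {poly C})
  (c c0 : nat -> ps) : ps :=
  fun n => (E (fun i => ps_trunc n.+1 (c i)) (fun i => ps_trunc n.+1 (c0 i)))`_n.

(** A term of o_{b+j}:  kind (1) (ot_kind2 = false):  alpha t^m c_2^{l_2}...c_a^{l_a};
    kind (2) (ot_kind2 = true): alpha t^m c^l (c_k - c_k(-oo)) (c_k' - c_k'(-oo)).
    The exponent m of t is not stored: it is the index under which the term
    is filed (see below). *)
Record oterm := OTerm {
  ot_kind2 : bool; ot_alpha : C; ot_l : nat -> nat; ot_k : nat; ot_k' : nat }.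

Definition oterm_ok (a b d j m : nat) (T : oterm) : Prop :=
  let w := (\sum_(2 <= p < a.+1) p * ot_l T p)%N in
  if ot_kind2 T then
    [/\ (2 <= ot_k T <= a)%N, (2 <= ot_k' T <= a)%N &
        (d * (b + j)%N <= m + d * w + d * (ot_k T + ot_k' T))%N]
  else (d * (b + j)%N + 1 <= m + d * w)%N.

Definition oterm_val (a m : nat) (T : oterm) (c c0 : nat -> {poly C}) : {poly C} :=
  ot_alpha T *: ('X^m * (\prod_(2 <= p < a.+1) c p ^+ ot_l T p)
     * (if ot_kind2 T then (c (ot_k T) - c0 (ot_k T)) * (c (ot_k' T) - c0 (ot_k' T))
        else 1)).

(** o_{b+j} is the t-adically convergent sum of the terms
    oterms j m q (q < ocnt j m), the term oterms j m q carrying t^m.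
    (Any t-adically convergent sum of such terms can be regrouped this way:
    only finitely many terms have a given power t^m.) *)
Definition oval (a : nat) (ocnt : nat -> nat -> nat)
  (oterms : nat -> nat -> nat -> oterm) (j : nat) (c c0 : nat -> ps) : ps :=
  fun n => (\sum_(m < n.+1) \sum_(q < ocnt j m)
     oterm_val a m (oterms j m q) (fun i => ps_trunc n.+1 (c i))
                                  (fun i => ps_trunc n.+1 (c0 i)))`_n.

Definition oterms_ok (a b d : nat) (ocnt : nat -> nat -> nat)
  (oterms : nat -> nat -> nat -> oterm) : Prop :=
  forall j m q, (1 <= j <= a.-1)%N -> (q < ocnt j m)%N -> oterm_ok a b d j m (oterms j m q).

Definition solves (a b d K : nat) (ct : nat -> C) (cinf : nat -> ps)
  (ocnt : nat -> nat -> nat) (oterms : nat -> nat -> nat -> oterm)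
  (c : nat -> ps) : Prop :=
  forall j, (1 <= j <= a.-1)%N ->
    eqmodt (d * (b + j)%N + K)
      (ps_eval (fun cc cc0 => fbar a b j cc cc0) c cinf)
      (fun n => t_mono (d * (b + j)%N) (fbC a b (b + j)%N ct) n
                + oval a ocnt oterms j c cinf n).

End Defs.

(* Main.v *)
Require Import Defs.
From HB Require Import structures.
From mathcomp Require Import all_boot all_order all_algebra.
From mathcomp Require Import mpoly.
From mathcomp Require Import complex.
From mathcomp Require Import ring zify.
From Stdlib Require Import FunctionalExtensionality.
Set Implicit Arguments. Unset Strict Implicit. Unset Printing Implicit Defensive.
Import Order.TTheory GRing.Theory Num.Theory.
Local Open Scope ring_scope.

From HB Require Import structures.
From mathcomp Require Import all_boot all_order all_algebra.
From mathcomp Require Import mpoly.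
From mathcomp Require Import complex.
From mathcomp Require Import ring zify.
Set Implicit Arguments. Unset Strict Implicit. Unset Printing Implicit Defensive.
Import Order.TTheory GRing.Theory Num.Theory.
Local Open Scope ring_scope.
Section Ord.
Variable K : comNzRingType.
Definition ordp (L : nat) (p : {poly K}) := forall i, (i < L)%N -> p`_i = 0.

Lemma ordp0 L : ordp L 0. Proof. by move=> i _; rewrite coef0. Qed.
Lemma ordpD L p q : ordp L p -> ordp L q -> ordp L (p + q).
Proof. by move=> hp hq i hi; rewrite coefD hp // hq // addr0. Qed.
Lemma ordpN L p : ordp L p -> ordp L (- p).
Proof. by move=> hp i hi; rewrite coefN hp // oppr0. Qed.
Lemma ordpB L p q : ordp L p -> ordp L q -> ordp L (p - q).
Proof. by move=> hp hq; apply: ordpD => //; apply: ordpN. Qed.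
Lemma ordpZ L c p : ordp L p -> ordp L (c *: p).
Proof. by move=> hp i hi; rewrite coefZ hp // mulr0. Qed.
Lemma ordp_le L L' p : (L' <= L)%N -> ordp L p -> ordp L' p.
Proof. by move=> hL hp i hi; apply: hp; apply: leq_trans hL. Qed.
Lemma ordpM L1 L2 p q : ordp L1 p -> ordp L2 q -> ordp (L1 + L2) (p * q).
Proof.
move=> hp hq i hi; rewrite coefM big1 // => [[j /=]]; rewrite ltnS => hj _.
case: (ltnP j L1) => h1; first by rewrite hp // mul0r.
by rewrite hq ?mulr0 //; lia.
Qed.
Lemma ordp_sum L (I : Type) (r : seq I) (P : pred I) (F : I -> {poly K}) :
  (forall i, P i -> ordp L (F i)) -> ordp L (\sum_(i <- r | P i) F i).
Proof. by move=> h; elim/big_ind: _ => //; [apply: ordp0 | apply: ordpD]. Qed.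
Lemma ordpXn L : ordp L 'X^L.
Proof. by move=> i hi; rewrite coefXn (ltn_eqF hi). Qed.
Lemma ordp_any p : ordp 0 p. Proof. by []. Qed.
Lemma ordpMw L L1 L2 p q : ordp L1 p -> ordp L2 q -> (L <= L1 + L2)%N -> ordp L (p * q).
Proof. by move=> hp hq hL; apply: ordp_le hL _; apply: ordpM. Qed.
Lemma ordpX L p m : ordp L p -> ordp (L * m) (p ^+ m).
Proof.
move=> hp; elim: m => [|m ih]; first by rewrite muln0.
by rewrite exprS mulnS; apply: ordpM.
Qed.
Lemma coefM_ordp k A H : ordp k H -> (A * H)`_k = A`_0 * H`_k.
Proof.
move=> hH; rewrite coefM big_ord_recl subn0 /= big1 ?addr0 // => [[j hj]] _ /=.
by rewrite hH ?mulr0 // /bump /=; lia.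
Qed.
End Ord.

From HB Require Import structures.
From mathcomp Require Import all_boot all_order all_algebra.
From mathcomp Require Import mpoly.
From mathcomp Require Import complex.
From mathcomp Require Import ring zify.
Set Implicit Arguments. Unset Strict Implicit. Unset Printing Implicit Defensive.
Import Order.TTheory GRing.Theory Num.Theory.
Local Open Scope ring_scope.
Section Taylor.
Variable K : comNzRingType.
Variable n k : nat.
Hypothesis k_gt0 : (0 < k)%N.
Variables X H : 'I_n -> {poly K}.
Hypothesis HH : forall v, ordp k (H v).
Local Notation ev := (mmap (@polyC K) X).
Local Notation evp := (mmap (@polyC K) (fun v => X v + H v)).
Definition good P := ordp k (evp P - ev P) /\
  ordp k.+1 (evp P - ev P - \sum_v ev (P^`M(v)) * H v).

Lemma evM P Q : ev (P * Q) = ev P * ev Q. Proof. exact: rmorphM. Qed.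
Lemma evpM P Q : evp (P * Q) = evp P * evp Q. Proof. exact: rmorphM. Qed.

Lemma goodM P Q : good P -> good Q -> good (P * Q).
Proof.
move=> [h1 h2] [h3 h4]; split.
  rewrite evpM evM (_ : _ - _ = (evp P - ev P) * evp Q + ev P * (evp Q - ev Q)); last by ring.
  apply: ordpD; first by apply: ordpMw h1 (ordp_any _) _; rewrite addn0.
  by apply: ordpMw (ordp_any _) h3 _.
rewrite evpM evM.
set S1 := \sum_v _.
have -> : S1 = (\sum_v ev (P^`M(v)) * H v) * ev Q + ev P * (\sum_v ev (Q^`M(v)) * H v).
  rewrite /S1 mulr_suml mulr_sumr -big_split /=; apply: eq_bigr => v _.
  by rewrite mderivM rmorphD /= !evM; ring.
set T1 := \sum_v ev (P^`M(v)) * H v.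
set T2 := \sum_v ev (Q^`M(v)) * H v.
have hT1 : ordp k T1.
  by apply: ordp_sum => v _; apply: ordpMw (ordp_any _) (HH v) _.
rewrite (_ : _ - _ = (evp P - ev P - T1) * evp Q + T1 * (evp Q - ev Q)
     + ev P * (evp Q - ev Q - T2)); last by ring.
apply: ordpD; last by apply: ordpMw (ordp_any _) h4 _.
apply: ordpD; first by apply: ordpMw h2 (ordp_any _) _; rewrite addn0.
by apply: ordpMw hT1 h3 _; lia.
Qed.

Lemma goodD P Q : good P -> good Q -> good (P + Q).
Proof.
move=> [h1 h2] [h3 h4]; rewrite /good !rmorphD /=.
split.
  by rewrite (_ : _ - _ = (evp P - ev P) + (evp Q - ev Q)); [apply: ordpD|ring].
rewrite (_ : \sum_v _ = \sum_v ev (P^`M(v)) * H v + \sum_v ev (Q^`M(v)) * H v).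
  set T1 := \sum_v _; set T2 := \sum_v _.
  rewrite (_ : _ - _ = (evp P - ev P - T1) + (evp Q - ev Q - T2)); last by ring.
  exact: ordpD.
by rewrite -big_split; apply: eq_bigr => v _; rewrite mderivD rmorphD mulrDl.
Qed.

Lemma evZ c P : ev (c *: P) = c%:P * ev P. Proof. by rewrite mmapZ. Qed.
Lemma evpZ c P : evp (c *: P) = c%:P * evp P. Proof. by rewrite mmapZ. Qed.

Lemma goodZ c P : good P -> good (c *: P).
Proof.
move=> [h1 h2]; rewrite /good evZ evpZ; split.
  by rewrite -mulrBr; apply: ordpMw (ordp_any _) h1 _.
rewrite (_ : \sum_v _ = c%:P * \sum_v ev (P^`M(v)) * H v).
  by rewrite -!mulrBr; apply: ordpMw (ordp_any _) h2 _.
by rewrite mulr_sumr; apply: eq_bigr => v _; rewrite mderivZ evZ mulrA.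
Qed.

Lemma good1 : good 1.
Proof.
rewrite /good !rmorph1 subrr big1 ?subr0; first by split; apply: ordp0.
by move=> v _; rewrite -mpolyC1 mderivC rmorph0 mul0r.
Qed.

Lemma goodX i : good 'X_i.
Proof.
rewrite /good !mmapX !mmap1U addrC addKr; split => //.
rewrite (bigD1 i) //= big1 => [|v hv].
  rewrite mderivX mnm1E eqxx; have -> : (U_(i) - U_(i) = 0)%MM by apply/mnmP => w; rewrite mnmBE mnm0E subnn.
  by rewrite mpolyX0 scale1r rmorph1 mul1r addr0 subrr; apply: ordp0.
by rewrite mderivX mnm1E eq_sym (negbTE hv) scale0r rmorph0 mul0r.
Qed.

Lemma good_all P : good P.
Proof.
elim/mpolyind: P => [|c m p _ _ hp].
  by rewrite /good !rmorph0 subrr big1 ?subr0; [split; apply: ordp0|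
     move=> v _; rewrite mderiv0 rmorph0 mul0r].
apply: goodD => //; apply: goodZ; rewrite mpolyXE_id.
elim/big_ind: _ => //; [exact: good1 | exact: goodM | move=> i _].
elim: (m i) => [|e ih]; first by rewrite expr0; exact: good1.
by rewrite exprS; apply: goodM => //; exact: goodX.
Qed.

Lemma taylor_coef P :
  (evp P - ev P)`_k = \sum_v (ev (P^`M(v)))`_0 * (H v)`_k.
Proof.
have [_ h] := good_all P.
have := h k (ltnSn k); rewrite coefB => /eqP; rewrite subr_eq0 => /eqP ->.
by rewrite coef_sum; apply: eq_bigr => v _; rewrite coefM_ordp.
Qed.
End Taylor.

Lemma ev_coef0 (K : comNzRingType) n (X : 'I_n -> {poly K}) (P : {mpoly K[n]}) :
  (mmap (@polyC K) X P)`_0 = P.@[fun v => (X v)`_0].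
Proof.
rewrite mevalE /mmap coef_sum; apply: eq_bigr => m _.
rewrite coefCM /mmap1; congr (_ * _).
rewrite -horner_coef0 horner_prod; apply: eq_bigr => v _ /=.
by rewrite horner_exp horner_coef0.
Qed.

Section FB.
Variable C : fieldType.

Lemma fb_ext (A : lalgType C) a b i (c c' : nat -> A) :
  (forall k, (2 <= k <= a)%N -> c k = c' k) -> fb a b i c = fb a b i c'.
Proof.
move=> h; rewrite /fb; apply: eq_bigr => n _; congr (_ *: _); congr (nth _ (polyseq (_ ^+ _)) _).
by apply: eq_big_nat => kk hk; rewrite h.
Qed.

Lemma fb_nat (A B : lalgType C) (f : {rmorphism A -> B})
  (fZ : forall (x : C) (y : A), f (x *: y) = x *: f y) a b i (c : nat -> A) :
  f (fb a b i c) = fb a b i (fun k => f (c k)).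
Proof.
rewrite /fb rmorph_sum; apply: eq_bigr => n _; rewrite fZ; congr (_ *: _).
rewrite -coef_map rmorphXn rmorph_sum; congr (nth _ (polyseq (_ ^+ _)) _).
by apply: eq_bigr => kk _; rewrite rmorphM /= map_polyC map_polyXn.
Qed.

Lemma pow_scale (A : comNzRingType) (s : A) (p q : {poly A}) :
  (forall j, q`_j = s ^+ j * p`_j) -> forall n i, (q ^+ n)`_i = s ^+ i * (p ^+ n)`_i.
Proof.
move=> hq; elim=> [|n ih] i.
  by rewrite !expr0 coef1; case: i => [|i] /=; rewrite ?expr0 ?mul1r ?mulr0.
rewrite !exprS !coefM mulr_sumr; apply: eq_bigr => [[j hj]] _ /=.
rewrite hq ih mulrACA -exprD subnKC //.
Qed.

Lemma fb_scale (A : comAlgType C) a b i (s : A) (c : nat -> A) :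
  fb a b i (fun k => s ^+ k * c k) = s ^+ i * fb a b i c.
Proof.
rewrite /fb mulr_sumr; apply: eq_bigr => n _; rewrite -scalerAr; congr (_ *: _).
apply: pow_scale => j; rewrite !coef_sum mulr_sumr; apply: eq_bigr => kk _.
rewrite !coefCM !coefXn; case: eqP => [->|]; last by rewrite !mulr0.
by rewrite !mulr1.
Qed.

Definition Lin (A : lalgType C) (a b j : nat) (h c0 : nat -> A) : A :=
  \sum_(2 <= k < j) (((j - k)%N%:R / a%:R) *: (h k * fb a b (b + j - k)%N c0))
  - \sum_(2 <= k < j) (((j - k)%N%:R / a%:R) *:
        \sum_(2 <= l < k.-1) (((a - l)%N%:R / a%:R) *:
            (h (k - l)%N * c0 l * fb a b (b + j - k)%N c0))).

Lemma fbar_Lin (A : lalgType C) a b j (c c0 : nat -> A) :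
  fbar a b j c c0 = fb a b (b + j) c + Lin a b j (fun k => c k - c0 k) c0.
Proof. by rewrite /fbar /Lin addrA. Qed.

Lemma LinD (A : lalgType C) a b j (h1 h2 c0 : nat -> A) :
  Lin a b j (fun k => h1 k + h2 k) c0 = Lin a b j h1 c0 + Lin a b j h2 c0.
Proof.
rewrite /Lin.
have -> : \sum_(2 <= k < j) (((j - k)%N%:R / a%:R) *: ((h1 k + h2 k) * fb a b (b + j - k)%N c0))
  = \sum_(2 <= k < j) (((j - k)%N%:R / a%:R) *: (h1 k * fb a b (b + j - k)%N c0))
  + \sum_(2 <= k < j) (((j - k)%N%:R / a%:R) *: (h2 k * fb a b (b + j - k)%N c0)).
  by rewrite -big_split; apply: eq_bigr => kk _; rewrite mulrDl scalerDr.
have -> : \sum_(2 <= k < j) (((j - k)%N%:R / a%:R) *: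
        \sum_(2 <= l < k.-1) (((a - l)%N%:R / a%:R) *:
            ((h1 (k - l)%N + h2 (k - l)%N) * c0 l * fb a b (b + j - k)%N c0)))
  = \sum_(2 <= k < j) (((j - k)%N%:R / a%:R) *:
        \sum_(2 <= l < k.-1) (((a - l)%N%:R / a%:R) *:
            (h1 (k - l)%N * c0 l * fb a b (b + j - k)%N c0)))
  + \sum_(2 <= k < j) (((j - k)%N%:R / a%:R) *:
        \sum_(2 <= l < k.-1) (((a - l)%N%:R / a%:R) *:
            (h2 (k - l)%N * c0 l * fb a b (b + j - k)%N c0))).
  rewrite -big_split; apply: eq_bigr => kk _ /=; rewrite -scalerDr -big_split /=.
  by congr (_ *: _); apply: eq_bigr => l _; rewrite !mulrDl scalerDr.
set x1 := \sum_(2 <= k < j) _; set x2 := \sum_(2 <= k < j) _.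
set y1 := \sum_(2 <= k < j) _; set y2 := \sum_(2 <= k < j) _.
by rewrite opprD addrACA.
Qed.

Lemma fbar_diff (A : lalgType C) a b j (c h c0 : nat -> A) :
  fbar a b j (fun k => c k + h k) c0 - fbar a b j c c0 =
  fb a b (b + j) (fun k => c k + h k) - fb a b (b + j) c + Lin a b j h c0.
Proof.
rewrite !fbar_Lin.
rewrite (_ : (fun k => c k + h k - c0 k) = (fun k => (c k - c0 k) + h k)); last first.
  by apply: functional_extensionality => kk; rewrite addrAC.
rewrite LinD; set u := Lin _ _ _ _ _; set v := Lin _ _ _ _ _.
by rewrite opprD addrACA (addrAC u v (- u)) subrr add0r.
Qed.

Lemma fbar_ext (A : lalgType C) a b j (c c' c0 c0' : nat -> A) : (j <= a)%N ->
  (forall k, (2 <= k <= a)%N -> c k = c' k /\ c0 k = c0' k) ->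
  fbar a b j c c0 = fbar a b j c' c0'.
Proof.
move=> ja h.
have e1 : forall i, fb a b i c = fb a b i c' by move=> i; apply: fb_ext => kk /h [].
have e2 : forall i, fb a b i c0 = fb a b i c0' by move=> i; apply: fb_ext => kk /h [].
rewrite /fbar e1; congr (_ + _ - _).
  apply: eq_big_nat => kk hk; have [-> ->] : c kk = c' kk /\ c0 kk = c0' kk by apply: h; lia.
  by rewrite e2.
apply: eq_big_nat => kk hk; congr (_ *: _); apply: eq_big_nat => l hl.
have [-> ->] : c (kk - l)%N = c' (kk - l)%N /\ c0 (kk - l)%N = c0' (kk - l)%N by apply: h; lia.
have [_ ->] : c l = c' l /\ c0 l = c0' l by apply: h; lia.
by rewrite e2.
Qed.

Lemma fbar_nat (A B : lalgType C) (f : {rmorphism A -> B})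
  (fZ : forall (x : C) (y : A), f (x *: y) = x *: f y) a b j (c c0 : nat -> A) :
  f (fbar a b j c c0) = fbar a b j (fun k => f (c k)) (fun k => f (c0 k)).
Proof.
rewrite /fbar rmorphB rmorphD /= fb_nat //; congr (_ + _ - _).
  rewrite rmorph_sum; apply: eq_bigr => kk _.
  by rewrite fZ rmorphM rmorphB fb_nat.
rewrite rmorph_sum; apply: eq_bigr => kk _; rewrite fZ rmorph_sum; congr (_ *: _).
by apply: eq_bigr => l _; rewrite fZ !rmorphM rmorphB fb_nat.
Qed.

Lemma fbar_scale (A : comAlgType C) a b j (s : A) (c c0 : nat -> A) :
  fbar a b j (fun k => s ^+ k * c k) (fun k => s ^+ k * c0 k) = s ^+ (b + j) * fbar a b j c c0.
Proof.
rewrite /fbar fb_scale mulrBr mulrDr; congr (_ + _ - _).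
  rewrite mulr_sumr; apply: eq_big_nat => kk hk.
  rewrite fb_scale -scalerAr; congr (_ *: _).
  rewrite -mulrBr mulrACA -exprD subnKC; last by lia.
  by rewrite mulrA.
rewrite mulr_sumr; apply: eq_big_nat => kk hk; rewrite -scalerAr mulr_sumr; congr (_ *: _).
apply: eq_big_nat => l hl; rewrite -scalerAr; congr (_ *: _).
rewrite fb_scale -mulrBr.
rewrite (_ : s ^+ (b + j) = s ^+ (kk - l) * s ^+ l * s ^+ (b + j - kk)); last first.
  by rewrite -!exprD; congr (_ ^+ _); lia.
ring.
Qed.
End FB.

Section Key.
Variable K : fieldType.
Implicit Types (P Q : nat -> {poly K}).

Lemma fb_ord1 a b i P Q : (forall v, (2 <= v <= a)%N -> (P v)`_0 = (Q v)`_0) ->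
  ordp 1 (fb a b i P - fb a b i Q).
Proof.
move=> h m; rewrite ltnS leqn0 => /eqP ->; rewrite coefB; apply/eqP; rewrite subr_eq0; apply/eqP.
have e : forall R : {poly K}, R`_0 = horner_eval (0 : K) R :> K^o.
  by move=> R; rewrite horner_evalE horner_coef0.
have fZ : forall (x : K) (y : {poly K}), horner_eval (0 : K) (x *: y) = x *: (horner_eval (0:K) y : K^o).
  by move=> x y; rewrite !horner_evalE hornerZ.
rewrite !e !(fb_nat (f := horner_eval (0:K) : {rmorphism {poly K} -> K^o})) //; apply: (@fb_ext K K^o) => v hv /=.
by rewrite !horner_evalE !horner_coef0 h.
Qed.

Lemma subBB (Z : zmodType) (x y z w : Z) : (x - y) - (z - w) = (x - z) - (y - w).
Proof. by rewrite !opprB (addrACA x (- y) w (- z)) (addrACA x (- z) w (- y)) (addrC (- y)). Qed.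

Lemma ordp_sum_nat L m n (F : nat -> {poly K}) :
  (forall i, (m <= i < n)%N -> ordp L (F i)) -> ordp L (\sum_(m <= i < n) F i).
Proof. by move=> h; rewrite big_nat_cond; apply: ordp_sum => i /andP [hi _]; apply: h. Qed.

Lemma Lin_diff a b j (hh v w : nat -> {poly K}) L M : (j <= a)%N ->
  (forall i, (2 <= i <= a)%N -> ordp L (hh i) /\ ordp M (v i - w i)) ->
  (forall i, ordp M (fb a b i v - fb a b i w)) ->
  ordp (L + M) (Lin a b j hh v - Lin a b j hh w).
Proof.
move=> ja h hf; rewrite /Lin subBB -[X in X - _]sumrB -[X in _ - X]sumrB.
apply: ordpB; apply: ordp_sum_nat => kk hk.
  rewrite -scalerBr -mulrBr; apply: ordpZ; apply: ordpM (hf _).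
  by have [] := h kk ltac:(lia).
rewrite -scalerBr -sumrB; apply: ordpZ; apply: ordp_sum_nat => l hl.
rewrite -scalerBr -!mulrA -mulrBr; apply: ordpZ; apply: ordpM.
  by have [] := h (kk - l)%N ltac:(lia).
have [_ hvw] := h l ltac:(lia).
rewrite (_ : _ - _ = (v l - w l) * fb a b (b + j - kk) v + w l * (fb a b (b + j - kk) v - fb a b (b + j - kk) w)); last by ring.
apply: ordpD; first by apply: ordpMw hvw (ordp_any _) _; lia.
by apply: ordpMw (ordp_any _) (hf _) _.
Qed.
End Key.

Section Key2.
Variable K : fieldType.
Variables (a b d j k : nat) (ct : nat -> K).
Hypothesis k_gt0 : (0 < k)%N.
Hypothesis hj : (1 <= j <= a.-1)%N.
Hypothesis ha : (2 <= a)%N.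
Variables (P Q : nat -> {poly K}) (E : nat -> K).
Hypothesis hPQ : forall i, (2 <= i <= a)%N -> ordp (d * i) (P i) /\ ordp (d * i) (Q i).

Let Hf i := E i *: 'X^(d * i + k) : {poly K}.
Let u i := drop_poly (d * i) (P i).
Let w i := drop_poly (d * i) (Q i).
Let hh i := E i *: 'X^k : {poly K}.
Let F := fbar a b j (mvar K a) (fun kk => (ct kk)%:MP).
Let Xv (v : 'I_a.+1) : {poly K} := if (2 <= v)%N then u v else (ct v)%:P.
Let Hv (v : 'I_a.+1) : {poly K} := if (2 <= v)%N then hh v else 0.
Let D := fbar a b j (fun i => u i + hh i) w - fbar a b j u w.

Lemma ordp_drop L (p : {poly K}) : ordp L p -> p = 'X^L * drop_poly L p.
Proof.
move=> h; apply/polyP => m; rewrite coefXnM coef_drop_poly.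
by case: ltnP => hm; [rewrite h | rewrite subnK].
Qed.

Lemma ja : (j <= a)%N. Proof. by case/andP: hj => _ h; apply: leq_trans h (leq_pred a). Qed.

Lemma step1 : fbar a b j (fun i => P i + Hf i) Q - fbar a b j P Q = 'X^(d * (b + j)) * D.
Proof.
have e1 : fbar a b j (fun i => P i + Hf i) Q =
    fbar a b j (fun i => ('X^d) ^+ i * (u i + hh i)) (fun i => ('X^d) ^+ i * w i).
  apply: fbar_ext ja _ => i hi; have [h1 h2] := hPQ hi; split.
    by rewrite -exprM mulrDr /u -(ordp_drop h1) /Hf /hh exprD scalerAr.
  by rewrite -exprM /w -(ordp_drop h2).
have e2 : fbar a b j P Q =
    fbar a b j (fun i => ('X^d) ^+ i * u i) (fun i => ('X^d) ^+ i * w i).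
  apply: fbar_ext ja _ => i hi; have [h1 h2] := hPQ hi; split.
  by rewrite -!exprM /u -(ordp_drop h1).
  by rewrite -!exprM /w -(ordp_drop h2).
by rewrite e1 e2 !fbar_scale -mulrBr -exprM.
Qed.
Lemma HvO v : ordp k (Hv v).
Proof. by rewrite /Hv; case: ifP => _; [apply: ordpZ; apply: ordpXn | apply: ordp0]. Qed.

Lemma evF (Y : nat -> {poly K}) :
  mmap (@polyC K) (fun v : 'I_a.+1 => if (2 <= v)%N then Y v else (ct v)%:P) F =
  fbar a b j Y (fun kk => (ct kk)%:P).
Proof.
rewrite /F (fbar_nat (f := mmap (@polyC K) _ : {rmorphism {mpoly K[a.+1]} -> {poly K}})); last first.
  by move=> x y; rewrite /= mmapZ mul_polyC.
apply: fbar_ext ja _ => i hi; rewrite /mvar /= mmapX mmap1U mmapC inordK; last by lia.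
by case/andP: hi => -> _; split.
Qed.
Lemma evpF : mmap (@polyC K) (fun v => Xv v + Hv v) F = fbar a b j (fun i => u i + hh i) (fun kk => (ct kk)%:P).
Proof.
rewrite -evF; congr mmap; apply: functional_extensionality => v.
by rewrite /Xv /Hv; case: ifP => _; rewrite ?addr0.
Qed.

Lemma evF0 : mmap (@polyC K) Xv F = fbar a b j u (fun kk => (ct kk)%:P).
Proof. by rewrite -evF. Qed.

Lemma zm (Z : zmodType) (x y z : Z) : x + y = (x + z) + (y - z).
Proof. by rewrite addrACA subrr addr0. Qed.
Lemma Ddec : D = (fbar a b j (fun i => u i + hh i) (fun kk => (ct kk)%:P) - fbar a b j u (fun kk => (ct kk)%:P))
   + (Lin a b j hh w - Lin a b j hh (fun kk => (ct kk)%:P)).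
Proof.
exact: (etrans (fbar_diff a b j u hh w) (etrans (zm _ _ (Lin a b j hh (fun kk => (ct kk)%:P)))
   (congr1 (fun x => x + _) (esym (fbar_diff a b j u hh (fun kk => (ct kk)%:P)))))).
Qed.

Lemma FB_ord : ordp (d * (b + j) + k)
   (fbar a b j (fun i => P i + Hf i) Q - fbar a b j P Q).
Proof.
Time rewrite step1. apply: ordpM; first exact: ordpXn.
Time rewrite Ddec -evpF -evF0. apply: ordpD; first by have [] := good_all k_gt0 Xv HvO F.
rewrite -[k]addn0; apply: Lin_diff ja _ _ => [i hi|i]; last by apply: ordp_any.
by split; [apply: ordpZ; apply: ordpXn | apply: ordp_any].
Qed.

Hypothesis hct : forall i, (2 <= i <= a)%N -> (P i)`_(d * i) = ct i /\ (Q i)`_(d * i) = ct i.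

Lemma FB_coef : (fbar a b j (fun i => P i + Hf i) Q - fbar a b j P Q)`_(d * (b + j) + k) =
  \sum_(v < a.+1) (F^`M(v)).@[fun v : 'I_a.+1 => ct v] * (if (2 <= v)%N then E v else 0).
Proof.
rewrite step1 coefXnM ltnNge leq_addr /= addKn Ddec -evpF -evF0 coefD.
have -> : (Lin a b j hh w - Lin a b j hh (fun kk => (ct kk)%:P))`_k = 0.
  apply: (Lin_diff (L := k) (M := 1)) ja _ _ k _; last by rewrite addn1.
    move=> i hi; split; first by apply: ordpZ; apply: ordpXn.
    move=> m; rewrite ltnS leqn0 => /eqP ->; rewrite coefB coef_drop_poly add0n coefC /=.
    by have [_ ->] := hct hi; rewrite subrr.
  move=> i; apply: fb_ord1 => v hv; rewrite coef_drop_poly add0n coefC /=.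
  by have [_ ->] := hct hv.
rewrite addr0 (taylor_coef k_gt0 Xv HvO F); apply: eq_bigr => v _.
rewrite ev_coef0; congr (_ * _).
  apply: meval_eq => v'; rewrite /Xv; case: ifP => h2; last by rewrite coefC.
  rewrite /u coef_drop_poly add0n.
  have hv' : (2 <= v' <= a)%N by rewrite h2 -ltnS ltn_ord.
  by have [-> _] := hct hv'.
by rewrite /Hv /hh; case: ifP => _; rewrite ?coef0 // coefZ coefXn eqxx mulr1.
Qed.
End Key2.

Section O.
Variable K : fieldType.

Lemma mul2 w1 w2 e (f1 g1 f2 g2 : {poly K}) : ordp w1 g1 -> ordp (w1 + e) (f1 - g1) ->
  ordp w2 g2 -> ordp (w2 + e) (f2 - g2) -> ordp (w1 + w2 + e) (f1 * f2 - g1 * g2).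
Proof.
move=> h1 h2 h3 h4.
have hf2 : ordp w2 f2.
  by rewrite (_ : f2 = g2 + (f2 - g2)); [apply: ordpD h3 (ordp_le _ h4); lia | rewrite addrC subrK].
rewrite (_ : _ - _ = (f1 - g1) * f2 + g1 * (f2 - g2)); last by ring.
apply: ordpD; first by apply: ordpMw h2 hf2 _; lia.
by apply: ordpMw h1 h4 _; lia.
Qed.

Lemma pow_diff w e (f g : {poly K}) : ordp w g -> ordp (w + e) (f - g) ->
  forall m, ordp (w * m) (g ^+ m) /\ ordp (w * m + e) (f ^+ m - g ^+ m).
Proof.
move=> h1 h2; elim=> [|m [ih1 ih2]]; first by rewrite !expr0 subrr muln0; split; [apply: ordp_any|apply: ordp0].
split; first by rewrite exprS mulnS; apply: ordpM.
by rewrite !exprS mulnS; apply: mul2.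
Qed.

Lemma prod_diff (r : seq nat) (f g : nat -> {poly K}) (wt : nat -> nat) e :
  (forall p, p \in r -> ordp (wt p) (g p) /\ ordp (wt p + e) (f p - g p)) ->
  ordp (\sum_(p <- r) wt p) (\prod_(p <- r) g p) /\
  ordp (\sum_(p <- r) wt p + e) (\prod_(p <- r) f p - \prod_(p <- r) g p).
Proof.
elim: r => [|x r ih] h; first by rewrite !big_nil subrr; split; [apply: ordp_any|apply: ordp0].
have [h1 h2] := h x (mem_head _ _).
have [ih1 ih2] := ih (fun p hp => h p (@mem_behead _ (x :: r) p hp)).
rewrite !big_cons; split; first by apply: ordpM.
by apply: mul2.
Qed.

Lemma oterm_diff a b d j m (T : oterm K) k (P Q : nat -> {poly K}) (E : nat -> K) :
  (0 < k)%N -> oterm_ok a b d j m T ->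
  (forall i, (2 <= i <= a)%N -> ordp (d * i) (P i) /\ ordp (d * i + 1) (P i - Q i)) ->
  ordp (d * (b + j) + k + 1)
   (oterm_val a m T (fun i => P i + E i *: 'X^(d * i + k)) Q - oterm_val a m T P Q).
Proof.
move=> k0 ok hPQ; rewrite /oterm_val -scalerBr; apply: ordpZ.
rewrite -!mulrA -mulrBr.
have hH : forall i, (2 <= i <= a)%N -> ordp (d * i + k) (P i + E i *: 'X^(d * i + k) - P i).
  by move=> i _; rewrite addrC addKr; apply: ordpZ; apply: ordpXn.
have PD : forall e, (e <= k)%N ->
  ordp (\sum_(2 <= p < a.+1) d * (p * ot_l T p)) (\prod_(2 <= p < a.+1) P p ^+ ot_l T p) /\
  ordp (\sum_(2 <= p < a.+1) d * (p * ot_l T p) + e)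
    (\prod_(2 <= p < a.+1) (P p + E p *: 'X^(d * p + k)) ^+ ot_l T p - \prod_(2 <= p < a.+1) P p ^+ ot_l T p).
  move=> e he; apply: prod_diff => p; rewrite mem_index_iota => hp.
  have [h1 _] := hPQ p ltac:(lia).
  have := pow_diff (e := e) h1 _ (ot_l T p).
  rewrite mulnA; apply; apply: ordp_le _ (hH p ltac:(lia)); lia.
have ew : (\sum_(2 <= p < a.+1) d * (p * ot_l T p) = d * \sum_(2 <= p < a.+1) p * ot_l T p)%N.
  by rewrite big_distrr.
move: ok; rewrite /oterm_ok; case: (ot_kind2 T) => /=.
  case=> /andP [k1a k1b] /andP [k2a k2b] hw.
  have [p1 p2] := PD k.-1 (leq_pred k).
  rewrite ew in p1 p2.
  set W := (d * _)%N in p1 p2 hw.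
  have [q1 q2] := hPQ (ot_k T) ltac:(lia).
  have [r1 r2] := hPQ (ot_k' T) ltac:(lia).
  have e1 : ordp (d * ot_k T + 1 + k.-1) (P (ot_k T) + E (ot_k T) *: 'X^(d * ot_k T + k) - Q (ot_k T) - (P (ot_k T) - Q (ot_k T))).
    rewrite (_ : _ - _ = E (ot_k T) *: 'X^(d * ot_k T + k)); last by ring.
    apply: ordpZ; apply: (@ordp_le _ (d * ot_k T + k)); [lia | exact: ordpXn].
  have e2 : ordp (d * ot_k' T + 1 + k.-1) (P (ot_k' T) + E (ot_k' T) *: 'X^(d * ot_k' T + k) - Q (ot_k' T) - (P (ot_k' T) - Q (ot_k' T))).
    rewrite (_ : _ - _ = E (ot_k' T) *: 'X^(d * ot_k' T + k)); last by ring.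
    apply: ordpZ; apply: (@ordp_le _ (d * ot_k' T + k)); [lia | exact: ordpXn].
  have m12 := mul2 q2 e1 r2 e2.
  have m3 := mul2 p1 p2 (ordpM q2 r2) m12.
  apply: ordpMw (@ordpXn _ m) m3 _; lia.
case: (PD k (leqnn k)) => p1 p2 hw; rewrite !mulr1.
rewrite ew in p2; apply: ordpMw (@ordpXn _ m) p2 _; lia.
Qed.
End O.

Section Main.
Variable C : fieldType.

Definition Mx (a b : nat) (ct : nat -> C) : 'M[C]_(a.-1) :=
  \matrix_(r < a.-1, s < a.-1)
     (mderiv (inord (s + 2)%N) (fbar a b r.+1 (mvar C a) (fun kk => (ct kk)%:MP))).@[
             fun v : 'I_a.+1 => ct v].

Lemma reindex a (g : 'I_a.+1 -> C) (E : nat -> C) : (2 <= a)%N ->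
  \sum_(v < a.+1) g v * (if (2 <= v)%N then E v else 0) =
  \sum_(s < a.-1) g (inord (s + 2)) * E (s + 2)%N.
Proof.
move=> ha.
pose G v := g (inord v) * (if (2 <= v)%N then E v else 0).
have e : \sum_(v < a.+1) g v * (if (2 <= v)%N then E v else 0) = \sum_(v < a.+1) G v.
  by apply: eq_bigr => v _; rewrite /G inord_val.
rewrite e -(big_mkord xpredT G) (big_cat_nat (n := 2)) //=; last by lia.
rewrite big_nat big1 ?add0r; last first.
  by move=> v /andP [_ hv]; rewrite /G; case: ifP => h; [lia | rewrite mulr0].
rewrite -{1}[2%N]add0n big_addn.
have -> : (a.+1 - 2 = a.-1)%N by lia.
rewrite big_mkord; apply: eq_bigr => s _; rewrite /G.
by have -> : (2 <= s + 2)%N by rewrite leq_addl.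
Qed.

Lemma trunc_bump n (c : ps C) m (e : C) :
  ps_trunc n.+1 (fun x => c x + (if x == m then e else 0)) =
  ps_trunc n.+1 c + (if (m < n.+1)%N then e else 0) *: 'X^m.
Proof.
apply/polyP => x; rewrite coefD coefZ coefXn !coef_poly.
have [->|hne] := eqVneq x m.
  by rewrite mulr1; case: ifP => _; rewrite ?addr0.
by rewrite mulr0 !addr0; case: ifP => _; rewrite ?addr0.
Qed.

Lemma trunc_ord n (c : ps C) L (x : C) : eqmodt L.+1 c (t_mono L x) ->
  ordp L (ps_trunc n c) /\ ((L < n)%N -> (ps_trunc n c)`_L = x).
Proof.
move=> h; split.
  move=> i hi; rewrite coef_poly; case: ifP => // _.
  rewrite h; last exact: ltnW hi. by rewrite /t_mono /= (ltn_eqF hi).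
by move=> hL; rewrite coef_poly hL h ?ltnSn // /t_mono /= eqxx.
Qed.

Lemma trunc_ordB n (c c' : ps C) L (x : C) : eqmodt L.+1 c (t_mono L x) ->
  eqmodt L.+1 c' (t_mono L x) -> ordp L.+1 (ps_trunc n c - ps_trunc n c').
Proof.
move=> h h' i hi; rewrite coefB !coef_poly; case: ifP => _; last by rewrite subrr.
by rewrite h // h' // subrr.
Qed.
End Main.

Section D.
Variable K : numFieldType.

Lemma mderiv_Xn n (i : 'I_n) e :
  mderiv i ('X_i ^+ e.+1 : {mpoly K[n]}) = e.+1%:R *: 'X_i ^+ e.
Proof.
have dX : mderiv i ('X_i : {mpoly K[n]}) = 1.
  rewrite mderivX mnm1E eqxx.
  have -> : (U_(i) - U_(i) = 0)%MM by apply/mnmP => w; rewrite mnmBE mnm0E subnn.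
  by rewrite mpolyX0 scale1r.
elim: e => [|e ih]; first by rewrite expr1 dX expr0 scale1r.
rewrite exprS mderivM dX mul1r ih -scalerAr -exprS.
by rewrite -[in RHS]natr1 scalerDl scale1r addrC.
Qed.

Lemma gbin_neq0 a b n : (0 < a)%N -> ~~ (a %| b)%N -> gbin K a b n != 0.
Proof.
move=> ha hdiv; rewrite /gbin mulf_neq0 //; last by rewrite invr_eq0 pnatr_eq0 -lt0n fact_gt0.
rewrite prodf_seq_neq0; apply/allP => j _ /=; rewrite subr_eq0.
apply/negP => /eqP e; move: hdiv; rewrite (_ : b = j * a)%N ?dvdn_mull //.
apply/eqP; rewrite -(eqr_nat K) natrM -e mulfVK //.
by rewrite pnatr_eq0 -lt0n.
Qed.

Lemma fb2 (A : comAlgType K) b m (c : nat -> A) : b = m.*2.+1 ->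
  fb 2 b (b + 1) c = gbin K 2 b m.+1 *: c 2 ^+ m.+1.
Proof.
move=> eb; rewrite /fb big_nat1.
have inner : forall n, (((c 2)%:P * 'X^2) ^+ n)`_(b + 1) = c 2 ^+ n * (b + 1 == 2 * n)%N%:R.
  by move=> n; rewrite exprMn -rmorphXn /= -exprM coefCM coefXn.
have hn0 : (m.+1 < (b + 1).+1)%N by lia.
rewrite (bigD1 (Ordinal hn0)) //= big1 ?addr0.
  by rewrite inner (_ : (b + 1 == 2 * m.+1)%N = true) ?mulr1 //; apply/eqP; lia.
move=> [n hn] /= hne; rewrite inner (_ : (b + 1 == 2 * n)%N = false) ?mulr0 ?scaler0 //.
apply/negbTE/eqP => e; move: hne; rewrite -val_eqE /=; apply/negP; rewrite negbK; apply/eqP; lia.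
Qed.

Lemma det_ne0K a b (ct : nat -> K) :
  (2 <= a)%N -> (a < b)%N -> ~~ (a %| b)%N -> condT a b ct -> \det (Mx a b ct) != 0.
Proof.
move=> ha hab hdiv; rewrite /condT; case: eqP => [ea|_]; last by [].
subst a => hct.
have [m eb] : exists m, b = m.*2.+1.
  exists b./2; move: hdiv; rewrite dvdn2 negbK => ho.
  by rewrite -{1}(odd_double_half b) ho add1n.
rewrite det_mx11 /Mx mxE /fbar big_geq // big_geq // addr0 subr0.
rewrite (fb2 _ eb) mderivZ /mvar mderiv_Xn mevalZ mevalZ rmorphXn /= mevalXU inordK //.
rewrite mulf_neq0 ?gbin_neq0 // mulf_neq0 ?expf_neq0 //.
by rewrite pnatr_eq0.
Qed.
End D.


Lemma det_ne0 (R : rcfType) a b (ct : nat -> R[i]) :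
  (2 <= a)%N -> (a < b)%N -> ~~ (a %| b)%N -> condT a b ct -> \det (Mx a b ct) != 0.
Proof. exact: det_ne0K. Qed.

Theorem mainTheorem11 (R : rcfType) (a b d k : nat)
  (ct : nat -> R[i]) (cinf : nat -> ps R[i])
  (ocnt : nat -> nat -> nat) (oterms : nat -> nat -> nat -> oterm R[i]) :
  (2 <= a)%N -> (a < b)%N -> ~~ (a %| b)%N -> (0 < d)%N -> (0 < k)%N ->
  condT a b ct ->
  (forall i, (2 <= i <= a)%N -> eqmodt (d * i).+1%N (cinf i) (t_mono (d * i)%N (ct i))) ->
  oterms_ok a b d ocnt oterms ->
  forall cprev : nat -> ps R[i],
    solves a b d k ct cinf ocnt oterms cprev ->
    (forall i, (2 <= i <= a)%N -> eqmodt (d * i).+1%N (cprev i) (t_mono (d * i)%N (ct i))) ->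
    exists cnext : nat -> ps R[i],
      solves a b d k.+1 ct cinf ocnt oterms cnext /\
      (forall i, (2 <= i <= a)%N -> eqmodt (d * i + k)%N (cnext i) (cprev i)).
Proof.
case: a => [|[|a0]] ha //; set a := a0.+2 in ha *; move=> hab hdiv hd hk hT hcinf hok cprev hsol hcprev.
have hU : Mx a b ct \in unitmx by rewrite unitmxE unitfE; apply: det_ne0.
pose LHSf j c n := ps_eval (fun cc cc0 => fbar a b j cc cc0) c cinf n.
pose RHSf j c n := t_mono (d * (b + j)) (fbC a b (b + j) ct) n + oval a ocnt oterms j c cinf n.
pose rv : 'cV[R[i]]_(a.-1) := \col_(r < a.-1)
   (RHSf r.+1 cprev (d * (b + r.+1) + k)%N - LHSf r.+1 cprev (d * (b + r.+1) + k)%N).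
pose ev := invmx (Mx a b ct) *m rv.
pose E i := ev (inord (i - 2)) 0.
pose cnext := fun i n => cprev i n + (if n == (d * i + k)%N then E i else 0).
exists cnext; split; last first.
  move=> i hi n hn; rewrite /cnext; case: eqP => [e|_]; last by rewrite addr0.
  by rewrite e ltnn in hn.
move=> j hj n hn.
set P := fun i => ps_trunc n.+1 (cprev i).
set Q := fun i => ps_trunc n.+1 (cinf i).
set E' := fun i => if (d * i + k < n.+1)%N then E i else 0.
have hPQ : forall i, (2 <= i <= a)%N -> ordp (d * i) (P i) /\ ordp (d * i) (Q i).
  move=> i hi; split; [exact: (trunc_ord _ (hcprev i hi)).1 | exact: (trunc_ord _ (hcinf i hi)).1].
have hPQd : forall i, (2 <= i <= a)%N -> ordp (d * i) (P i) /\ ordp (d * i + 1) (P i - Q i).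
  move=> i hi; split; first by have [] := hPQ i hi.
  by rewrite addn1; apply: trunc_ordB (hcprev i hi) (hcinf i hi).
have htr : (fun i => ps_trunc n.+1 (cnext i)) = (fun i => P i + E' i *: 'X^(d * i + k)).
  by apply: functional_extensionality => i; rewrite /cnext trunc_bump.
have eL : LHSf j cnext n = LHSf j cprev n +
   (fbar a b j (fun i => P i + E' i *: 'X^(d * i + k)) Q - fbar a b j P Q)`_n.
  by rewrite /LHSf /ps_eval htr [X in _ = _ + X]coefB addrC subrK.
have eO : oval a ocnt oterms j cnext cinf n = oval a ocnt oterms j cprev cinf n.
  rewrite /oval htr; apply/eqP; rewrite -subr_eq0 -coefB -sumrB; apply/eqP.
  apply: (ordp_sum (L := (d * (b + j) + k + 1)%N)) => [m _|]; last by lia.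
  rewrite -sumrB; apply: ordp_sum => q _.
  exact: oterm_diff hk (hok j m q hj (ltn_ord q)) hPQd.
change (LHSf j cnext n = RHSf j cnext n).
have eR : RHSf j cnext n = RHSf j cprev n by rewrite /RHSf eO.
rewrite eL eR.
have hj' : (j <= a.-1)%N by case/andP: hj.
case: (ltnP n (d * (b + j) + k)) => hlt.
  rewrite (FB_ord (b := b) ct hk hj ha E' hPQ hlt) addr0.
  exact: hsol j hj n hlt.
have en : n = (d * (b + j) + k)%N by lia.
have hct : forall i, (2 <= i <= a)%N -> (P i)`_(d * i) = ct i /\ (Q i)`_(d * i) = ct i.
  move=> i hi; have hdi : (d * i <= d * (b + j))%N by rewrite leq_mul2l; apply/orP; right; lia.
  split; [apply: (trunc_ord _ (hcprev i hi)).2 | apply: (trunc_ord _ (hcinf i hi)).2]; lia.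
rewrite en (FB_coef b hk hj ha E' hPQ hct) (reindex _ _ ha).
have hr : ((inord j.-1 : 'I_a.-1) : nat).+1 = j.
  by rewrite inordK ?prednK //; lia.
rewrite (_ : \sum_(s < a.-1) _ = (Mx a b ct *m ev) (inord j.-1) 0); last first.
  rewrite mxE; apply: eq_bigr => s _; rewrite /Mx mxE hr; congr (_ * _).
  rewrite /E' ifT; last first.
    have := ltn_ord s; move=> hs; have : (d * (s + 2) <= d * (b + j))%N by rewrite leq_mul2l; apply/orP; right; lia.
    lia.
  by rewrite /E addnK inord_val.
rewrite mulKVmx // mxE hr.
by rewrite addrC subrK.
Qed.
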